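(* If a propositional logic $\mathbf{L}$ is decidable, then it has an effective sequential approximation.
   Context: A propositional language $\mathcal{L}$ has variables $X_1,X_2,\ldots$ and finitely many connectives with arities; $\mathrm{Frm}(\mathcal{L})$ is the set of formulas. A propositional logic is a set $\mathbf{L}\subseteq\mathrm{Frm}(\mathcal{L})$ closed under substitution of formulas for variables. A finite-valued logic $\mathbf{M}$ is given by a finite set $V(\mathbf{M})$ of truth values, designated values $V^+(\mathbf{M})\subseteq V(\mathbf{M})$, and a truth function for each connective; valuations map variables to truth values and extend to formulas; a tautology is a formula designated under every valuation; $\mathrm{Taut}(\mathbf{M})$ is the set of tautologies; $\mathbf{M}_1\unlhd\mathbf{M}_2$ means $\mathrm{Taut}(\mathbf{M}_1)\subseteq\mathrm{Taut}(\mathbf{M}_2)$. A sequential approximation of $\mathbf{L}$ is a sequence $\langle\mathbf{M}_1,\mathbf{M}_2,\ldots\rangle$ of finite-valued logics over $\mathcal{L}$ such that $\mathbf{M}_i\unlhd\mathbf{M}_j$ whenever $i\ge j$, and $\mathbf{L}=\bigcap_j\mathrm{Taut}(\mathbf{M}_j)$. It is effective if the sequence is effectively enumerated (there is an algorithm producing, given $i$, the finite description of $\mathbf{M}_i$). *)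

(* Defs.v *)
From Stdlib Require Import Arith List.
Import ListNotations.

(* A language: finitely many connectives, numbered 0 .. nconn-1, with arities. *)
Record lang := Lang { nconn : nat; arity : nat -> nat }.

Inductive term : Type :=
| Var : nat -> term
| App : nat -> list term -> term.

(* Well-formed formulas of the language L: connectives exist and are applied
   to the right number of arguments.  Frm(L) = { t | wf L t }. *)
Fixpoint wf (L : lang) (t : term) : Prop :=
  match t with
  | Var _ => True
  | App c args =>
      c < nconn L /\ length args = arity L c /\
      (fix wfl (l : list term) : Prop :=
         match l with
         | [] => True
         | a :: l' => wf L a /\ wfl l'
         end) args
  end.

Fixpoint subst (sigma : nat -> term) (t : term) : term :=
  match t with
  | Var n => sigma n
  | App c args => App c (map (subst sigma) args)
  end.

Definition is_logic (L : lang) (Lg : term -> Prop) : Prop :=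
  (forall t, Lg t -> wf L t) /\
  (forall (sigma : nat -> term) (t : term),
      (forall n, wf L (sigma n)) -> Lg t -> Lg (subst sigma t)).

(* Truth values are 0 .. nv-1; designated values are those v < nv with
   desig v = true; op c is the truth function of connective c. *)
Record fmatrix := FMatrix {
  nv : nat;
  desig : nat -> bool;
  op : nat -> list nat -> nat }.

Definition is_fmatrix (L : lang) (M : fmatrix) : Prop :=
  0 < nv M /\
  forall c vs, c < nconn L -> length vs = arity L c ->
    Forall (fun v => v < nv M) vs -> op M c vs < nv M.

Fixpoint evalM (M : fmatrix) (val : nat -> nat) (t : term) : nat :=
  match t with
  | Var n => val n
  | App c args => op M c (map (evalM M val) args)
  end.

Definition Taut (L : lang) (M : fmatrix) (t : term) : Prop :=
  wf L t /\
  forall val : nat -> nat, (forall n, val n < nv M) ->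
    desig M (evalM M val t) = true.

Definition seq_approx (L : lang) (Lg : term -> Prop) (Ms : nat -> fmatrix)
  : Prop :=
  (forall i, is_fmatrix L (Ms i)) /\
  (forall i j, j <= i -> forall t, Taut L (Ms i) t -> Taut L (Ms j) t) /\
  (forall t, wf L t -> (Lg t <-> forall j, Taut L (Ms j) t)).

Inductive rf : Type :=
| rZero : rf
| rSucc : rf
| rProj : nat -> rf
| rComp : rf -> list rf -> rf
| rPrim : rf -> rf -> rf
| rMu   : rf -> rf.

Inductive reval : rf -> list nat -> nat -> Prop :=
| ev_zero : forall xs, reval rZero xs 0
| ev_succ : forall x xs, reval rSucc (x :: xs) (S x)
| ev_proj : forall i xs, i < length xs -> reval (rProj i) xs (nth i xs 0)
| ev_comp : forall f gs xs ys y,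
    Forall2 (fun g y0 => reval g xs y0) gs ys ->
    reval f ys y -> reval (rComp f gs) xs y
| ev_prim0 : forall f g xs y, reval f xs y -> reval (rPrim f g) (0 :: xs) y
| ev_primS : forall f g n xs y z,
    reval (rPrim f g) (n :: xs) y -> reval g (n :: y :: xs) z ->
    reval (rPrim f g) (S n :: xs) z
| ev_mu : forall f xs n,
    reval f (n :: xs) 0 ->
    (forall m, m < n -> exists k, reval f (m :: xs) (S k)) ->
    reval (rMu f) xs n.

Definition cpair (x y : nat) : nat := (x + y) * (x + y + 1) / 2 + y.

Fixpoint code (t : term) : nat :=
  match t with
  | Var n => cpair 0 n
  | App c args =>
      cpair (S c)
        ((fix codel (l : list term) : nat :=
            match l with
            | [] => 0
            | a :: l' => S (cpair (code a) (codel l'))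
            end) args)
  end.

Definition decidable_logic (L : lang) (Lg : term -> Prop) : Prop :=
  exists r : rf, forall t, wf L t ->
    (exists y, reval r [code t] y) /\ (reval r [code t] 0 <-> Lg t).

Definition effective_seq (L : lang) (Ms : nat -> fmatrix) : Prop :=
  exists rN rD rO : rf, forall i,
    reval rN [i] (nv (Ms i)) /\
    (forall v, v < nv (Ms i) ->
       reval rD [i; v] (if desig (Ms i) v then 1 else 0)) /\
    (forall c vs, c < nconn L -> length vs = arity L c ->
       Forall (fun v => v < nv (Ms i)) vs ->
       reval rO (i :: c :: vs) (op (Ms i) c vs)).

(* Main.v *)
Require Import Defs.
From Stdlib Require Import Arith List Lia Bool ClassicalEpsilon.
Import ListNotations.

Inductive ex : Type :=
| EX : nat -> ex
| EZ : ex
| ES : ex -> ex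
| ER : ex -> ex -> ex -> ex -> ex -> ex.

Fixpoint eval (e : ex) (xs : list nat) : nat :=
  match e with
  | EX i => nth i xs 0
  | EZ => 0
  | ES e => S (eval e xs)
  | ER b s n x y =>
      nat_rect (fun _ => nat) (eval b [eval x xs; eval y xs])
        (fun k acc => eval s [k; acc; eval x xs; eval y xs]) (eval n xs)
  end.

Fixpoint comp (e : ex) : rf :=
  match e with
  | EX i => rProj i
  | EZ => rZero
  | ES e => rComp rSucc [comp e]
  | ER b s n x y => rComp (rPrim (comp b) (comp s)) [comp n; comp x; comp y]
  end.

Fixpoint sc (e : ex) (m : nat) : Prop :=
  match e with
  | EX i => i < m
  | EZ => True
  | ES e => sc e m
  | ER b s n x y => sc b 2 /\ sc s 4 /\ sc n m /\ sc x m /\ sc y m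
  end.

Lemma comp_ok : forall e m xs, sc e m -> m <= length xs ->
  reval (comp e) xs (eval e xs).
Proof.
  induction e; intros m xs Hs Hl; simpl in *.
  - apply ev_proj. lia.
  - apply ev_zero.
  - eapply ev_comp. constructor. eapply IHe; eauto. constructor.
    apply ev_succ.
  - destruct Hs as (H1 & H2 & H3 & H4 & H5).
    eapply ev_comp.
    + repeat constructor; [eapply IHe3|eapply IHe4|eapply IHe5]; eauto.
    + induction (eval e3 xs) as [|k IH]; simpl.
      * apply ev_prim0. eapply IHe1; eauto.
      * eapply ev_primS. exact IH. eapply IHe2; eauto.
Qed.

Definition b2n (b : bool) : nat := if b then 1 else 0.
Definition ifz (c x y : nat) : nat := match c with 0 => x | S _ => y end.

Definition Eadd a b := ER (EX 0) (ES (EX 1)) a b EZ.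
Definition Emul a b := ER EZ (Eadd (EX 1) (EX 2)) a b EZ.
Definition Epred a := ER EZ (EX 0) a EZ EZ.
Definition Esub a b := ER (EX 0) (Epred (EX 1)) b a EZ.
Definition Eisz a := ER (ES EZ) EZ a EZ EZ.
Definition Eleb a b := Eisz (Esub a b).
Definition Eltb a b := Eleb (ES a) b.
Definition Eeqb a b := Emul (Eleb a b) (Eleb b a).
Definition Eifz c x y := ER (EX 0) (EX 3) c x y.
Fixpoint Econst k := match k with 0 => EZ | S k => ES (Econst k) end.

Ltac scs := simpl; repeat split; auto; try lia.

Lemma sc_add a b m : sc a m -> sc b m -> sc (Eadd a b) m. Proof. scs. Qed.
Lemma sc_mul a b m : sc a m -> sc b m -> sc (Emul a b) m. Proof. scs. Qed.
Lemma sc_pred a m : sc a m -> sc (Epred a) m. Proof. scs. Qed.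
Lemma sc_sub a b m : sc a m -> sc b m -> sc (Esub a b) m. Proof. scs. Qed.
Lemma sc_isz a m : sc a m -> sc (Eisz a) m. Proof. scs. Qed.
Lemma sc_leb a b m : sc a m -> sc b m -> sc (Eleb a b) m. Proof. scs. Qed.
Lemma sc_ltb a b m : sc a m -> sc b m -> sc (Eltb a b) m. Proof. scs. Qed.
Lemma sc_eqb a b m : sc a m -> sc b m -> sc (Eeqb a b) m. Proof. scs. Qed.
Lemma sc_ifz a b c m : sc a m -> sc b m -> sc c m -> sc (Eifz a b c) m. Proof. scs. Qed.
Lemma sc_const k m : sc (Econst k) m. Proof. induction k; simpl; auto. Qed.
Lemma sc_S a m : sc a m -> sc (ES a) m. Proof. auto. Qed.
Lemma sc_Z m : sc EZ m. Proof. simpl; auto. Qed.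
Lemma sc_X i m : i < m -> sc (EX i) m. Proof. auto. Qed.

#[export] Hint Resolve sc_add sc_mul sc_pred sc_sub sc_isz sc_leb sc_ltb sc_eqb sc_ifz sc_const sc_S sc_Z : sch.

Lemma ev_add a b xs : eval (Eadd a b) xs = eval a xs + eval b xs.
Proof. unfold Eadd; cbn [eval nth]. induction (eval a xs) as [|k IH]; cbn [nat_rect]; lia. Qed.
Lemma ev_mul a b xs : eval (Emul a b) xs = eval a xs * eval b xs.
Proof. unfold Emul; cbn [eval nth]. induction (eval a xs) as [|k IH]; cbn [nat_rect]; [lia|].
  rewrite ev_add. cbn [eval nth]. rewrite IH. lia. Qed.
Lemma ev_pred a xs : eval (Epred a) xs = pred (eval a xs).
Proof. unfold Epred; cbn [eval nth]. destruct (eval a xs); reflexivity. Qed.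
Lemma ev_sub a b xs : eval (Esub a b) xs = eval a xs - eval b xs.
Proof. unfold Esub; cbn [eval nth]. induction (eval b xs) as [|k IH]; cbn [nat_rect]; [lia|].
  rewrite ev_pred. cbn [eval nth]. rewrite IH. lia. Qed.
Lemma ev_isz a xs : eval (Eisz a) xs = b2n (eval a xs =? 0).
Proof. unfold Eisz; cbn [eval nth]. destruct (eval a xs); reflexivity. Qed.
Lemma ev_leb a b xs : eval (Eleb a b) xs = b2n (eval a xs <=? eval b xs).
Proof. unfold Eleb. rewrite ev_isz, ev_sub.
  destruct (Nat.leb_spec (eval a xs) (eval b xs)); destruct (Nat.eqb_spec (eval a xs - eval b xs) 0); simpl; auto; lia. Qed.
Lemma ev_ltb a b xs : eval (Eltb a b) xs = b2n (eval a xs <? eval b xs).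
Proof. unfold Eltb. rewrite ev_leb. reflexivity. Qed.
Lemma ev_eqb a b xs : eval (Eeqb a b) xs = b2n (eval a xs =? eval b xs).
Proof. unfold Eeqb. rewrite ev_mul, !ev_leb.
  destruct (Nat.leb_spec (eval a xs) (eval b xs)); destruct (Nat.leb_spec (eval b xs) (eval a xs));
  destruct (Nat.eqb_spec (eval a xs) (eval b xs)); simpl; auto; lia. Qed.
Lemma ev_ifz a b c xs : eval (Eifz a b c) xs = ifz (eval a xs) (eval b xs) (eval c xs).
Proof. unfold Eifz; cbn [eval nth]. destruct (eval a xs); reflexivity. Qed.
Lemma ev_const k xs : eval (Econst k) xs = k.
Proof. induction k; simpl; auto. Qed.

Fixpoint tri n := match n with 0 => 0 | S k => tri k + S k end.
Fixpoint sm z := match z with 0 => 0 | S k => if tri (S (sm k)) <=? S k then S (sm k) else sm k end.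
Definition p2 z := z - tri (sm z).
Definition p1 z := sm z - p2 z.

Definition Etri a := ER EZ (Eadd (EX 1) (ES (EX 0))) a EZ EZ.
Definition Esm a := ER EZ (Eifz (Eleb (Etri (ES (EX 1))) (ES (EX 0))) (EX 1) (ES (EX 1))) a EZ EZ.
Definition Ep2 a := Esub a (Etri (Esm a)).
Definition Ep1 a := Esub (Esm a) (Ep2 a).
Definition Ecpair a b := Eadd (Etri (Eadd a b)) b.

Lemma sc_tri a m : sc a m -> sc (Etri a) m. Proof. scs. Qed.
Lemma sc_sm a m : sc a m -> sc (Esm a) m. Proof. scs. Qed.
Lemma sc_p2 a m : sc a m -> sc (Ep2 a) m. Proof. scs. Qed.
Lemma sc_p1 a m : sc a m -> sc (Ep1 a) m. Proof. scs. Qed.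
Lemma sc_cpair a b m : sc a m -> sc b m -> sc (Ecpair a b) m. Proof. scs. Qed.
#[export] Hint Resolve sc_tri sc_sm sc_p2 sc_p1 sc_cpair : sch.

Lemma ev_tri a xs : eval (Etri a) xs = tri (eval a xs).
Proof. unfold Etri; cbn [eval nth]. induction (eval a xs) as [|k IH]; cbn [nat_rect]; [reflexivity|].
  rewrite ev_add. cbn [eval nth]. rewrite IH. simpl. lia. Qed.
Lemma ev_sm a xs : eval (Esm a) xs = sm (eval a xs).
Proof. unfold Esm; cbn [eval nth]. induction (eval a xs) as [|k IH]; cbn [nat_rect]; [reflexivity|].
  rewrite ev_ifz, ev_leb, ev_tri. cbn [eval nth]. rewrite IH. simpl.
  destruct (tri (sm k) + S (sm k) <=? S k); reflexivity. Qed.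
Lemma ev_p2 a xs : eval (Ep2 a) xs = p2 (eval a xs).
Proof. unfold Ep2. rewrite ev_sub, ev_tri, ev_sm. reflexivity. Qed.
Lemma ev_p1 a xs : eval (Ep1 a) xs = p1 (eval a xs).
Proof. unfold Ep1. rewrite ev_sub, ev_sm, ev_p2. reflexivity. Qed.

Lemma tri2 n : 2 * tri n = n * (n + 1).
Proof. induction n; simpl tri; lia. Qed.
Lemma cpair_tri x y : cpair x y = tri (x + y) + y.
Proof. unfold cpair. f_equal. rewrite <- tri2. rewrite Nat.mul_comm. apply Nat.div_mul. lia. Qed.
Lemma ev_cpair a b xs : eval (Ecpair a b) xs = cpair (eval a xs) (eval b xs).
Proof. unfold Ecpair. rewrite ev_add, ev_tri, ev_add, cpair_tri. reflexivity. Qed.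

Lemma tri_ge n : n <= tri n.
Proof. induction n; simpl; lia. Qed.
Lemma tri_mono a b : a <= b -> tri a <= tri b.
Proof. induction 1; simpl; lia. Qed.
Lemma sm_spec z : tri (sm z) <= z < tri (S (sm z)).
Proof. induction z; simpl. lia.
  destruct (Nat.leb_spec (tri (sm z) + S (sm z)) (S z)); simpl in *; lia. Qed.
Lemma sm_unique z s : tri s <= z < tri (S s) -> sm z = s.
Proof. intros H. pose proof (sm_spec z).
  destruct (Nat.lt_trichotomy (sm z) s) as [Hl|[He|Hl]]; auto.
  - assert (tri (S (sm z)) <= tri s) by (apply tri_mono; lia). lia.
  - assert (tri (S s) <= tri (sm z)) by (apply tri_mono; lia). lia.
Qed.
Lemma cpair_p z : cpair (p1 z) (p2 z) = z.
Proof. rewrite cpair_tri. pose proof (sm_spec z). simpl in H. unfold p1, p2.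
  replace (sm z - (z - tri (sm z)) + (z - tri (sm z))) with (sm z) by lia. lia. Qed.
Lemma sm_cpair x y : sm (cpair x y) = x + y.
Proof. apply sm_unique. rewrite cpair_tri. simpl. lia. Qed.
Lemma p2_cpair x y : p2 (cpair x y) = y.
Proof. unfold p2. rewrite sm_cpair. rewrite cpair_tri. lia. Qed.
Lemma p1_cpair x y : p1 (cpair x y) = x.
Proof. unfold p1. rewrite p2_cpair, sm_cpair. lia. Qed.
Lemma cpair_ge x y : x + y <= cpair x y.
Proof. rewrite cpair_tri. pose proof (tri_ge (x+y)). lia. Qed.
Lemma cpair_gtS c y : y < cpair (S c) y.
Proof. rewrite cpair_tri. pose proof (tri_ge (S c + y)). simpl in *. lia. Qed.
Lemma p12_le z : p1 z + p2 z <= z.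
Proof. rewrite <- (cpair_p z) at 3. apply cpair_ge. Qed.
Lemma cpair_inj x y x' y' : cpair x y = cpair x' y' -> x = x' /\ y = y'.
Proof. intros H. split.
  - rewrite <- (p1_cpair x y), <- (p1_cpair x' y'), H; auto.
  - rewrite <- (p2_cpair x y), <- (p2_cpair x' y'), H; auto. Qed.

Ltac solsc1 := match goal with
  | |- sc EZ _ => apply sc_Z
  | |- sc (Econst _) _ => apply sc_const
  | |- sc (EX _) _ => apply sc_X; lia
  | |- sc (ES _) _ => apply sc_S
  | |- sc (Eifz _ _ _) _ => apply sc_ifz
  | |- sc (Ep1 _) _ => apply sc_p1
  | |- sc (Ep2 _) _ => apply sc_p2
  | |- sc (Epred _) _ => apply sc_pred
  | |- sc (Ecpair _ _) _ => apply sc_cpair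
  | |- sc (Eltb _ _) _ => apply sc_ltb
  | |- sc (Eleb _ _) _ => apply sc_leb
  | |- sc (Eeqb _ _) _ => apply sc_eqb
  | |- sc (Eisz _) _ => apply sc_isz
  | |- sc (Eadd _ _) _ => apply sc_add
  | |- sc (Emul _ _) _ => apply sc_mul
  | |- sc (Esub _ _) _ => apply sc_sub
  | |- sc (Etri _) _ => apply sc_tri
  | |- sc (Esm _) _ => apply sc_sm
  | |- _ => assumption
  end.

Section TI.
Variable P : term -> Prop.
Hypothesis HV : forall n, P (Var n).
Hypothesis HA : forall c args, Forall P args -> P (App c args).
Fixpoint tind (t : term) : P t :=
  match t with
  | Var n => HV n
  | App c args => HA c args ((fix go (l : list term) : Forall P l :=
       match l with [] => Forall_nil _ | a :: l' => Forall_cons _ (tind a) (go l') end) args)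
  end.
End TI.

Fixpoint codel (l : list term) : nat :=
  match l with [] => 0 | a :: l' => S (cpair (code a) (codel l')) end.

Lemma code_App c args : code (App c args) = cpair (S c) (codel args).
Proof. reflexivity. Qed.

Lemma wf_App L c args : wf L (App c args) <-> c < nconn L /\ length args = arity L c /\ Forall (wf L) args.
Proof. simpl. assert (forall l, (fix wfl (l : list term) : Prop :=
         match l with
         | [] => True
         | a :: l' => wf L a /\ wfl l'
         end) l <-> Forall (wf L) l).
  { induction l; simpl. split; auto. rewrite Forall_cons_iff. tauto. }
  rewrite H. tauto. Qed.

Lemma code_inj : forall t u, code t = code u -> t = u.
Proof.
  induction t as [n|c args IH] using tind; intros [m|d brgs] H; rewrite ?code_App in H; simpl in H.
  - apply cpair_inj in H. destruct H; subst; auto.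
  - apply cpair_inj in H. destruct H; discriminate.
  - apply cpair_inj in H. destruct H; discriminate.
  - apply cpair_inj in H. destruct H as [H1 H2]. injection H1 as ->. f_equal.
    revert brgs H2. induction IH as [|a l Ha Hl IHl]; intros [|b brgs] H2; simpl in H2; try discriminate; auto.
    injection H2 as H2. apply cpair_inj in H2. destruct H2. f_equal; auto.
Qed.

Lemma codel_nil l : codel l = 0 -> l = [].
Proof. destruct l; simpl; auto; discriminate. Qed.

Section Machine.
Variable L : lang.

Fixpoint artab (n c : nat) : nat :=
  match n with 0 => 0 | S k => ifz (b2n (c =? k)) (artab k c) (arity L k) end.
Fixpoint Etab (n : nat) (a : ex) : ex :=
  match n with 0 => EZ | S k => Eifz (Eeqb a (Econst k)) (Etab k a) (Econst (arity L k)) end.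

Lemma sc_tab n a m : sc a m -> sc (Etab n a) m.
Proof. induction n; simpl Etab; auto with sch. Qed.
Lemma ev_tab n a xs : eval (Etab n a) xs = artab n (eval a xs).
Proof. induction n; simpl Etab; simpl artab; auto. rewrite ev_ifz, ev_eqb, ev_const, IHn, ev_const. reflexivity. Qed.
Lemma artab_ok n c : c < n -> artab n c = arity L c.
Proof. induction n; intros H. lia. simpl. destruct (Nat.eqb_spec c n); simpl; subst; auto.
  apply IHn. lia. Qed.

Definition termc (w rest : nat) : nat :=
  ifz (p1 w) (S rest)
    (ifz (b2n (pred (p1 w) <? nconn L)) 0
       (S (S (cpair (cpair (S (artab (nconn L) (pred (p1 w)))) (p2 w)) rest)))).
Definition listc (k w rest : nat) : nat :=
  ifz w (ifz k (S rest) 0)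
    (ifz k 0 (S (S (cpair (cpair 0 (p1 (pred w))) (S (cpair (cpair k (p2 (pred w))) rest)))))).
Definition stepc (p : nat) : nat :=
  ifz (p1 (p1 p)) (termc (p2 (p1 p)) (p2 p)) (listc (pred (p1 (p1 p))) (p2 (p1 p)) (p2 p)).
Definition stepf (st : nat) : nat :=
  ifz st 0 (ifz (pred st) 1 (stepc (pred (pred st)))).

Definition EtermC (w rest : ex) : ex :=
  Eifz (Ep1 w) (ES rest)
    (Eifz (Eltb (Epred (Ep1 w)) (Econst (nconn L))) EZ
       (ES (ES (Ecpair (Ecpair (ES (Etab (nconn L) (Epred (Ep1 w)))) (Ep2 w)) rest)))).
Definition ElistC (k w rest : ex) : ex :=
  Eifz w (Eifz k (ES rest) EZ)
    (Eifz k EZ (ES (ES (Ecpair (Ecpair EZ (Ep1 (Epred w))) (ES (Ecpair (Ecpair k (Ep2 (Epred w))) rest)))))).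
Definition EstepC (p : ex) : ex :=
  Eifz (Ep1 (Ep1 p)) (EtermC (Ep2 (Ep1 p)) (Ep2 p)) (ElistC (Epred (Ep1 (Ep1 p))) (Ep2 (Ep1 p)) (Ep2 p)).
Definition EstepF (a : ex) : ex :=
  Eifz a EZ (Eifz (Epred a) (Econst 1) (EstepC (Epred (Epred a)))).

Lemma sc_stepF a m : sc a m -> sc (EstepF a) m.
Proof. intros. unfold EstepF, EstepC, EtermC, ElistC. repeat (solsc1 || apply sc_tab). Qed.

Lemma ev_stepF a xs : eval (EstepF a) xs = stepf (eval a xs).
Proof. unfold EstepF, EstepC, EtermC, ElistC, stepf, stepc, termc, listc.
  repeat (rewrite ?ev_ifz, ?ev_pred, ?ev_p1, ?ev_p2, ?ev_ltb, ?ev_cpair, ?ev_const, ?ev_tab; cbn [eval]).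
  reflexivity. Qed.

End Machine.

Section M2.
Variable L : lang.

Fixpoint enc (l : list nat) : nat := match l with [] => 0 | it :: r => S (cpair it (enc r)) end.
Definition wt it := match p1 it with 0 => 2 * p2 it + 1 | S _ => 2 * p2 it + 2 end.
Fixpoint W (l : list nat) : nat := match l with [] => 0 | it :: r => wt it + W r end.
Definition item_ok it := match p1 it with
  | 0 => exists t, wf L t /\ code t = p2 it
  | S k => exists l, Forall (wf L) l /\ length l = k /\ codel l = p2 it end.

Lemma W_app a b : W (a ++ b) = W a + W b.
Proof. induction a; simpl; lia. Qed.

Lemma stepf_SS x : stepf L (S (S x)) = stepc L x.
Proof. reflexivity. Qed.

Lemma step_cons it r :
  (stepf L (S (enc (it :: r))) = 0 /\ ~ item_ok it) \/
  exists new, stepf L (S (enc (it :: r))) = S (enc (new ++ r)) /\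
    (item_ok it <-> Forall item_ok new) /\ W new < wt it.
Proof.
  cbn [enc]. rewrite stepf_SS. unfold stepc. rewrite p1_cpair, p2_cpair.
  unfold item_ok, wt.
  set (tag := p1 it) in *. set (w := p2 it) in *. clearbody tag w.
  destruct tag as [|k].
  - unfold termc. cbn [ifz].
    assert (Hw : w = cpair (p1 w) (p2 w)) by (symmetry; apply cpair_p).
    set (a := p1 w) in *. set (y := p2 w) in *. clearbody a y.
    destruct a as [|c].
    + right. exists []. cbn [ifz]. split; [reflexivity|]. split; [|simpl; lia].
      split; [constructor|]. intros _. exists (Var y). split; [exact I|]. rewrite Hw. reflexivity.
    + cbn [ifz pred]. destruct (c <? nconn L) eqn:Hc; cbn [b2n ifz].
      * apply Nat.ltb_lt in Hc. right. exists [cpair (S (arity L c)) y].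
        rewrite artab_ok by exact Hc. split; [reflexivity|].
        split.
        -- rewrite Forall_cons_iff. unfold item_ok. rewrite p1_cpair, p2_cpair. split.
           ++ intros [t [Hwf Ht]]. split; [|constructor].
              destruct t as [n|d args].
              ** rewrite Hw in Ht. simpl in Ht. apply cpair_inj in Ht. destruct Ht; discriminate.
              ** rewrite code_App, Hw in Ht. apply cpair_inj in Ht. destruct Ht as [Hd Ha].
                 injection Hd as ->. apply wf_App in Hwf. exists args. tauto.
           ++ intros [[l [H1 [H2 H3]]] _]. exists (App c l). split.
              ** apply wf_App. auto.
              ** rewrite code_App, H3. auto.
        -- simpl. unfold wt. rewrite p1_cpair, p2_cpair. pose proof (cpair_gtS c y). rewrite <- Hw in H. lia.
      * apply Nat.ltb_ge in Hc. left. split; [reflexivity|].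
        intros [t [Hwf Ht]]. destruct t as [n|d args].
        -- rewrite Hw in Ht. simpl in Ht. apply cpair_inj in Ht. destruct Ht; discriminate.
        -- rewrite code_App, Hw in Ht. apply cpair_inj in Ht. destruct Ht as [Hd Ha].
           injection Hd as ->. apply wf_App in Hwf. lia.
  - unfold listc. cbn [pred]. destruct w as [|w'].
    + cbn [ifz]. destruct k as [|k].
      * right. exists []. split; [reflexivity|]. split; [|simpl; lia].
        split; [constructor|]. intros _. exists []. simpl. auto.
      * left. split; [reflexivity|]. intros [l [_ [Hl Hc]]]. apply codel_nil in Hc. subst. discriminate.
    + cbn [ifz]. destruct k as [|k].
      * left. split; [reflexivity|]. intros [l [_ [Hl Hc]]]. destruct l; simpl in *; [discriminate|lia].
      * right. exists [cpair 0 (p1 w'); cpair (S k) (p2 w')]. split; [reflexivity|].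
        assert (Hw : w' = cpair (p1 w') (p2 w')) by (symmetry; apply cpair_p).
        split.
        -- rewrite !Forall_cons_iff. unfold item_ok. rewrite !p1_cpair, !p2_cpair. split.
           ++ intros [l [Hf [Hl Hc]]]. destruct l as [|t l]; [discriminate|].
              simpl in Hl, Hc. injection Hc as Hc. rewrite Hw in Hc. apply cpair_inj in Hc.
              inversion Hf; subst. destruct Hc as [K1 K2].
              split; [exists t; auto|]. split; [exists l; auto|constructor].
           ++ intros [[t [Ht1 Ht2]] [[l [G1 [G2 G3]]] _]].
              exists (t :: l). split; [constructor; auto|]. simpl. split; [lia|].
              rewrite Ht2, G3, <- Hw. reflexivity.
        -- simpl. unfold wt. rewrite !p1_cpair, !p2_cpair. pose proof (p12_le w'). lia.
Qed.

Definition iterf (n x : nat) : nat := nat_rect (fun _ => nat) x (fun _ acc => stepf L acc) n.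

Lemma iterf_S n x : iterf (S n) x = iterf n (stepf L x).
Proof. unfold iterf. revert x. induction n; intros x; simpl; auto.
  simpl in IHn. rewrite <- IHn. reflexivity. Qed.
Lemma iterf_0 n : iterf n 0 = 0.
Proof. induction n; simpl; auto. unfold iterf in *. simpl. rewrite IHn. reflexivity. Qed.
Lemma iterf_1 n : iterf n 1 = 1.
Proof. induction n; simpl; auto. unfold iterf in *. simpl. rewrite IHn. reflexivity. Qed.

Lemma wt_pos it : 1 <= wt it.
Proof. unfold wt. destruct (p1 it); lia. Qed.

Lemma run f l : W l <= f -> (iterf f (S (enc l)) = 1 <-> Forall item_ok l).
Proof.
  revert l. induction f; intros l Hf.
  - destruct l. simpl. split; auto. simpl in Hf. pose proof (wt_pos n). lia.
  - destruct l as [|it r].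
    + simpl. rewrite iterf_1. split; auto.
    + rewrite iterf_S. destruct (step_cons it r) as [[H1 H2]|[new [H1 [H2 H3]]]].
      * rewrite H1, iterf_0. split; [discriminate|]. intros Hc. inversion Hc; tauto.
      * rewrite H1, IHf. rewrite Forall_app, Forall_cons_iff. tauto.
        rewrite W_app. simpl in Hf. lia.
Qed.

Definition goodb (v : nat) : bool := iterf (S (2 * v)) (S (enc [cpair 0 v])) =? 1.

Lemma goodb_spec v : goodb v = true <-> exists t, wf L t /\ code t = v.
Proof. unfold goodb. rewrite Nat.eqb_eq, run.
  - rewrite Forall_cons_iff. unfold item_ok at 1. rewrite p1_cpair, p2_cpair.
    split; [tauto|]. intros H; split; auto.
  - simpl. unfold wt. rewrite p1_cpair, p2_cpair. lia.
Qed.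

Definition Egood (a : ex) : ex :=
  Eeqb (ER (EX 0) (EstepF L (EX 1)) (ES (Emul (Econst 2) a)) (ES (ES (Ecpair (Ecpair EZ a) EZ))) EZ) (Econst 1).

Lemma sc_good a m : sc a m -> sc (Egood a) m.
Proof. intros. unfold Egood. apply sc_eqb; [|apply sc_const]. cbn [sc]. split; [lia|]. split.
  apply sc_stepF. simpl; lia. split. apply sc_S, sc_mul; auto. apply sc_const.
  split; auto. repeat apply sc_S. apply sc_cpair; auto. apply sc_cpair; auto. simpl; auto. simpl; auto. Qed.

Lemma nat_rect_ext (x : nat) (f g : nat -> nat -> nat) n :
  (forall k acc, f k acc = g k acc) -> nat_rect (fun _ => nat) x f n = nat_rect (fun _ => nat) x g n.
Proof. intros H. induction n; simpl; auto. rewrite IHn. apply H. Qed.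

Lemma ev_good a xs : eval (Egood a) xs = b2n (goodb (eval a xs)).
Proof. unfold Egood. rewrite ev_eqb, ev_const. unfold goodb. f_equal. f_equal.
  cbn [eval]. rewrite ev_mul, ev_const, ev_cpair, ev_cpair. cbn [eval nth].
  unfold iterf. simpl enc. apply nat_rect_ext. intros. rewrite ev_stepF. reflexivity. Qed.
End M2.

Section Mat.
Variable L : lang.
Variable Lg : term -> Prop.

Definition goodi (i v : nat) : bool := (v <=? i) && goodb L v.

Fixpoint codel' (vs : list nat) : nat :=
  match vs with [] => 0 | a :: l => S (cpair a (codel' l)) end.

Lemma codel'_map l : codel' (map code l) = codel l.
Proof. induction l; simpl; congruence. Qed.

Definition opi (i c : nat) (vs : list nat) : nat :=
  if forallb (goodi i) vs && (cpair (S c) (codel' vs) <=? i) then cpair (S c) (codel' vs) else S i.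

Definition dec (v : nat) : term :=
  match excluded_middle_informative (exists t, wf L t /\ code t = v) with
  | left H => proj1_sig (constructive_indefinite_description _ H)
  | right _ => Var 0 end.

Lemma dec_wf v : wf L (dec v).
Proof. unfold dec. destruct excluded_middle_informative as [H|H]; [|exact I].
  destruct constructive_indefinite_description as [t Ht]. simpl. tauto. Qed.
Lemma dec_code v : (exists t, wf L t /\ code t = v) -> code (dec v) = v.
Proof. intros H0. unfold dec. destruct excluded_middle_informative as [H|H]; [|tauto].
  destruct constructive_indefinite_description as [t Ht]. simpl. tauto. Qed.
Lemma dec_good i v : goodi i v = true -> code (dec v) = v.
Proof. unfold goodi. rewrite andb_true_iff. intros [_ H]. apply dec_code. apply goodb_spec. exact H. Qed.

Definition desigi (i v : nat) : bool :=
  if goodi i v then (if excluded_middle_informative (Lg (dec v)) then true else false) else true.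

Definition Ms (i : nat) : fmatrix := FMatrix (S (S i)) (desigi i) (opi i).

Lemma goodi_Si i : goodi i (S i) = false.
Proof. unfold goodi. replace (S i <=? i) with false. reflexivity. symmetry. apply Nat.leb_gt. lia. Qed.

Lemma opi_good i c vs : goodi i (opi i c vs) = true ->
  forallb (goodi i) vs = true /\ cpair (S c) (codel' vs) <= i /\ opi i c vs = cpair (S c) (codel' vs).
Proof. unfold opi. destruct (forallb (goodi i) vs && (cpair (S c) (codel' vs) <=? i)) eqn:E.
  - apply andb_true_iff in E. destruct E as [E1 E2]. apply Nat.leb_le in E2. auto.
  - rewrite goodi_Si. discriminate. Qed.

Lemma is_fm i : is_fmatrix L (Ms i).
Proof. split; simpl. lia. intros c vs _ _ _. unfold opi.
  destruct (forallb (goodi i) vs && (cpair (S c) (codel' vs) <=? i)) eqn:E; [|lia].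
  apply andb_true_iff in E. destruct E as [_ E]. apply Nat.leb_le in E. lia. Qed.

Lemma evalE i (val : nat -> nat) : forall s, wf L s ->
  goodi i (evalM (Ms i) val s) = true ->
  evalM (Ms i) val s = code (subst (fun n => dec (val n)) s).
Proof.
  induction s as [n|c args IH] using tind; intros Hwf Hg.
  - simpl in *. symmetry. apply dec_good with i. exact Hg.
  - cbn [evalM] in *. simpl op in *. apply opi_good in Hg. destruct Hg as (H1 & H2 & H3).
    rewrite H3. cbn [subst]. rewrite code_App. f_equal.
    rewrite <- codel'_map, map_map. f_equal. apply map_ext_in. intros a Ha.
    apply wf_App in Hwf. destruct Hwf as (_ & _ & Hw).
    rewrite Forall_forall in IH, Hw. apply IH; auto.
    rewrite forallb_forall in H1. apply H1. apply in_map. exact Ha.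
Qed.

Hypothesis HLg : is_logic L Lg.

Lemma goodi_mono j i v : j <= i -> goodi j v = true -> goodi i v = true.
Proof. unfold goodi. rewrite !andb_true_iff, !Nat.leb_le. intros ? [? ?]; split; auto; lia. Qed.

Lemma desig_same j i v : goodi j v = true -> goodi i v = true -> desigi j v = desigi i v.
Proof. unfold desigi. intros -> ->. reflexivity. Qed.

Lemma Lg_taut i t : wf L t -> Lg t -> Taut L (Ms i) t.
Proof. intros Hw HL. split; auto. intros val Hval. simpl desig.
  unfold desigi. destruct (goodi i (evalM (Ms i) val t)) eqn:E; auto.
  destruct excluded_middle_informative as [H|H]; auto. exfalso. apply H.
  pose proof (evalE i val t Hw E) as He.
  assert (dec (evalM (Ms i) val t) = subst (fun n => dec (val n)) t).
  { apply code_inj. rewrite <- He. apply dec_good with i. exact E. }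
  rewrite H0. apply (proj2 HLg); auto. intros n. apply dec_wf. Qed.

Lemma evalMono j i val : j <= i -> forall s, wf L s ->
  goodi j (evalM (Ms j) val s) = true ->
  evalM (Ms i) (fun n => if val n =? S j then S i else val n) s = evalM (Ms j) val s.
Proof.
  intros Hji. induction s as [n|c args IH] using tind; intros Hwf Hg.
  - simpl in *. destruct (Nat.eqb_spec (val n) (S j)); auto. rewrite e, goodi_Si in Hg. discriminate.
  - cbn [evalM] in *. simpl op in *. pose proof (opi_good _ _ _ Hg) as (H1 & H2 & H3).
    assert (Hm : map (evalM (Ms i) (fun n => if val n =? S j then S i else val n)) args = map (evalM (Ms j) val) args).
    { apply map_ext_in. intros a Ha. apply wf_App in Hwf. destruct Hwf as (_ & _ & Hw).
      rewrite Forall_forall in IH, Hw. apply IH; auto.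
      rewrite forallb_forall in H1. apply H1. apply in_map. exact Ha. }
    rewrite Hm, H3. unfold opi.
    replace (forallb (goodi i) (map (evalM (Ms j) val) args)) with true.
    + replace (cpair (S c) (codel' (map (evalM (Ms j) val) args)) <=? i) with true. reflexivity.
      symmetry. apply Nat.leb_le. lia.
    + symmetry. rewrite forallb_forall in *. intros x Hx. apply goodi_mono with j; auto.
Qed.

Lemma mono i j : j <= i -> forall t, Taut L (Ms i) t -> Taut L (Ms j) t.
Proof. intros Hji t [Hw Ht]. split; auto. intros val Hval. simpl desig.
  unfold desigi at 1. destruct (goodi j (evalM (Ms j) val t)) eqn:E; auto.
  rewrite <- (evalMono j i val Hji t Hw E) in E |- *.
  assert (Hgi : goodi i (evalM (Ms i) (fun n => if val n =? S j then S i else val n) t) = true)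
    by (apply goodi_mono with j; auto).
  specialize (Ht (fun n => if val n =? S j then S i else val n)).
  simpl desig in Ht. unfold desigi in Ht. rewrite Hgi in Ht. apply Ht.
  intros n. simpl. specialize (Hval n). simpl in Hval. destruct (Nat.eqb_spec (val n) (S j)); lia.
Qed.

Lemma code_arg_le a args c : In a args -> code a <= code (App c args).
Proof. rewrite code_App. intros H. pose proof (cpair_ge (S c) (codel args)).
  enough (code a <= codel args) by lia. clear c H0. induction args as [|b l IHl]; [destruct H|]; destruct H as [->|H]; simpl.
  - pose proof (cpair_ge (code a) (codel l)). lia.
  - pose proof (cpair_ge (code b) (codel l)). specialize (IHl H). lia.
Qed.

Definition valj (j n : nat) : nat := if cpair 0 n <=? j then cpair 0 n else S j.

Lemma evalF j : forall s, wf L s -> code s <= j -> evalM (Ms j) (valj j) s = code s.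
Proof.
  induction s as [n|c args IH] using tind; intros Hwf Hle.
  - simpl in *. unfold valj. replace (cpair 0 n <=? j) with true; auto. symmetry; apply Nat.leb_le; auto.
  - cbn [evalM]. simpl op. apply wf_App in Hwf. destruct Hwf as (_ & _ & Hw).
    assert (Hm : map (evalM (Ms j) (valj j)) args = map code args).
    { apply map_ext_in. intros a Ha. rewrite Forall_forall in IH, Hw. apply IH; auto.
      pose proof (code_arg_le a args c Ha). lia. }
    rewrite Hm. unfold opi. rewrite codel'_map. rewrite <- code_App.
    replace (code (App c args) <=? j) with true by (symmetry; apply Nat.leb_le; auto).
    replace (forallb (goodi j) (map code args)) with true. reflexivity.
    symmetry. apply forallb_forall. intros x Hx. apply in_map_iff in Hx. destruct Hx as [a [<- Ha]].
    unfold goodi. apply andb_true_iff. split.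
    + apply Nat.leb_le. pose proof (code_arg_le a args c Ha). lia.
    + apply goodb_spec. exists a. rewrite Forall_forall in Hw. auto.
Qed.

Lemma taut_Lg t : wf L t -> (forall j, Taut L (Ms j) t) -> Lg t.
Proof. intros Hw H. destruct (H (code t)) as [_ Ht].
  assert (Hv : forall n, valj (code t) n < nv (Ms (code t))).
  { intros n. simpl. unfold valj. destruct (cpair 0 n <=? code t) eqn:E; [apply Nat.leb_le in E|]; lia. }
  specialize (Ht _ Hv). simpl in Ht.
  rewrite evalF in Ht; auto.
  unfold desigi in Ht.
  assert (Hg : goodi (code t) (code t) = true).
  { unfold goodi. apply andb_true_iff. split. apply Nat.leb_le; auto. apply goodb_spec. eauto. }
  rewrite Hg in Ht. destruct excluded_middle_informative as [HL|HL]; [|discriminate Ht].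
  replace t with (dec (code t)); auto. apply code_inj. apply dec_good with (code t). exact Hg.
Qed.

Lemma seqA : seq_approx L Lg Ms.
Proof. split; [exact is_fm|]. split; [exact mono|].
  intros t Hw. split. intros HL j. apply Lg_taut; auto. apply taut_Lg; auto. Qed.

End Mat.

Definition Drop (B : rf) : rf := rPrim B (rProj 1).
Lemma Drop_ok B rest b : reval B rest b -> forall x, reval (Drop B) (x :: rest) b.
Proof. intros H x. induction x. apply ev_prim0; auto.
  eapply ev_primS. exact IHx. apply (ev_proj 1 (x :: b :: rest)). simpl; lia. Qed.

Definition Eabsd := Eadd (Esub (EX 0) (EX 1)) (Esub (EX 1) (EX 0)).
Definition Guard (A B : rf) : rf := rMu (rPrim A (rComp (comp Eabsd) [rProj 0; Drop (Drop B)])).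

Lemma absd_ok k b : reval (comp Eabsd) [k; b] ((k - b) + (b - k)).
Proof. pose proof (comp_ok Eabsd 2 [k; b]) as H.
  assert (E : eval Eabsd [k; b] = (k - b) + (b - k)) by (unfold Eabsd; rewrite ev_add, !ev_sub; reflexivity). rewrite E in H. apply H; [|simpl; lia].
  unfold Eabsd. solsc1; solsc1; solsc1. Qed.

Lemma guard_f A B xs a b : reval A xs a -> reval B xs b -> forall m,
  reval (rPrim A (rComp (comp Eabsd) [rProj 0; Drop (Drop B)])) (m :: xs)
    (match m with 0 => a | S k => (k - b) + (b - k) end).
Proof. intros HA HB m. induction m.
  - apply ev_prim0. exact HA.
  - eapply ev_primS. exact IHm. apply ev_comp with (ys := [m; b]); [|apply absd_ok].
    constructor. apply (ev_proj 0 (m :: _ :: xs)). simpl; lia.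
    constructor; [|constructor]. apply Drop_ok. apply Drop_ok. exact HB. Qed.

Lemma guard0 A B xs : reval A xs 0 -> reval (Guard A B) xs 0.
Proof. intros HA. apply ev_mu. apply ev_prim0. exact HA. intros m Hm; lia. Qed.

Lemma guard1 A B xs a b : reval A xs (S a) -> reval B xs b -> reval (Guard A B) xs (S b).
Proof. intros HA HB. apply ev_mu.
  - pose proof (guard_f A B xs (S a) b HA HB (S b)). simpl in H. replace (b - b + (b - b)) with 0 in H by lia. exact H.
  - intros m Hm. pose proof (guard_f A B xs (S a) b HA HB m). destruct m.
    + eauto.
    + exists (b - m - 1). replace (S (b - m - 1)) with (m - b + (b - m)) by lia. exact H. Qed.

Section Eff.
Variable L : lang.

Definition Egoodi (vE iE : ex) : ex := Emul (Eleb vE iE) (Egood L vE).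
Lemma sc_goodi vE iE m : sc vE m -> sc iE m -> sc (Egoodi vE iE) m.
Proof. intros. unfold Egoodi. apply sc_mul. apply sc_leb; auto. apply sc_good; auto. Qed.
Lemma ev_goodi vE iE xs : eval (Egoodi vE iE) xs = b2n (goodi L (eval iE xs) (eval vE xs)).
Proof. unfold Egoodi, goodi. rewrite ev_mul, ev_leb, ev_good.
  destruct (eval vE xs <=? eval iE xs), (goodb L (eval vE xs)); reflexivity. Qed.

Lemma b2n_and x y : b2n x * b2n y = b2n (x && y).
Proof. destruct x, y; reflexivity. Qed.

Fixpoint Ecl (j a : nat) : ex := match a with 0 => EZ | S a' => ES (Ecpair (EX (2+j)) (Ecl (S j) a')) end.
Fixpoint Egs (j a : nat) : ex := match a with 0 => Econst 1 | S a' => Emul (Egoodi (EX (2+j)) (EX 0)) (Egs (S j) a') end.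
Definition Ebr (c a : nat) : ex :=
  Eifz (Emul (Egs 0 a) (Eleb (Ecpair (Econst (S c)) (Ecl 0 a)) (EX 0))) (ES (EX 0)) (Ecpair (Econst (S c)) (Ecl 0 a)).

Lemma sc_cl a : forall j m, 2 + j + a <= m -> sc (Ecl j a) m /\ sc (Egs j a) m.
Proof. induction a; intros j m H; cbn [Ecl Egs]. split. apply sc_Z. apply sc_const.
  destruct (IHa (S j) m ltac:(lia)). split.
  - apply sc_S, sc_cpair; auto. simpl; lia.
  - apply sc_mul; auto. apply sc_goodi; simpl; lia. Qed.

Lemma skipn_nth_cons (l : list nat) j : j < length l -> skipn j l = nth j l 0 :: skipn (S j) l.
Proof. revert j; induction l; intros j H; simpl in H. lia. destruct j; simpl; auto. apply IHl. lia. Qed.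

Lemma ev_cl i c vs a : forall j, j + a = length vs ->
  eval (Ecl j a) (i :: c :: vs) = codel' (skipn j vs) /\
  eval (Egs j a) (i :: c :: vs) = b2n (forallb (goodi L i) (skipn j vs)).
Proof. induction a; intros j H; cbn [Ecl Egs].
  - rewrite ev_const. replace j with (length vs) by lia. rewrite skipn_all. auto.
  - destruct (IHa (S j) ltac:(lia)) as [H1 H2].
    rewrite (skipn_nth_cons vs j) by lia. cbn [eval]. rewrite ev_cpair, ev_mul, ev_goodi. cbn [eval nth].
    rewrite H1, H2. split; [reflexivity|]. cbn [forallb]. apply b2n_and. Qed.

Lemma ev_br i c vs : length vs = arity L c ->
  eval (Ebr c (arity L c)) (i :: c :: vs) = opi L i c vs.
Proof. intros H. destruct (ev_cl i c vs (arity L c) 0 ltac:(lia)) as [H1 H2].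
  unfold Ebr. rewrite ev_ifz, ev_mul, ev_leb, ev_cpair, ev_const. rewrite H1, H2. cbn [eval nth skipn].
  unfold opi. destruct (forallb (goodi L i) vs), (cpair (S c) (codel' vs) <=? i); reflexivity. Qed.

Definition Eplp := Epred (Eadd (EX 0) (EX 1)).
Fixpoint Dk (k : nat) : rf :=
  match k with
  | 0 => rZero
  | S k' => rComp (comp Eplp)
      [Guard (comp (Eeqb (EX 1) (Econst k'))) (comp (Ebr k' (arity L k')));
       Guard (comp (Eisz (Eeqb (EX 1) (Econst k')))) (Dk k')]
  end.

Lemma plp_ok a b : reval (comp Eplp) [a; b] (pred (a + b)).
Proof. pose proof (comp_ok Eplp 2 [a; b]) as H. assert (E : eval Eplp [a; b] = pred (a + b)) by (unfold Eplp; rewrite ev_pred, ev_add; reflexivity). rewrite E in H. apply H; [|simpl; lia]. unfold Eplp. solsc1; solsc1; solsc1. Qed.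

Lemma Dk_ok k : forall i c vs, c < k -> length vs = arity L c -> reval (Dk k) (i :: c :: vs) (opi L i c vs).
Proof. induction k; intros i c vs Hc Hl. lia. simpl Dk.
  assert (Heq : reval (comp (Eeqb (EX 1) (Econst k))) (i :: c :: vs) (b2n (c =? k))).
  { pose proof (comp_ok (Eeqb (EX 1) (Econst k)) 2 (i :: c :: vs)) as H.
    rewrite ev_eqb, ev_const in H. apply H; [|simpl; lia]. apply sc_eqb. simpl; lia. apply sc_const. }
  assert (Hneq : reval (comp (Eisz (Eeqb (EX 1) (Econst k)))) (i :: c :: vs) (b2n (b2n (c =? k) =? 0))).
  { pose proof (comp_ok (Eisz (Eeqb (EX 1) (Econst k))) 2 (i :: c :: vs)) as H.
    rewrite ev_isz, ev_eqb, ev_const in H. apply H; [|simpl; lia]. apply sc_isz, sc_eqb. simpl; lia. apply sc_const. }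
  destruct (Nat.eqb_spec c k).
  - subst c. cbn [b2n Nat.eqb] in Heq, Hneq. apply ev_comp with (ys := [S (opi L i k vs); 0]).
    2:{ replace (opi L i k vs) with (pred (S (opi L i k vs) + 0)) at 2 by lia. exact (plp_ok _ _). }
    constructor. eapply guard1. exact Heq.
    + pose proof (comp_ok (Ebr k (arity L k)) (2 + arity L k) (i :: k :: vs)) as H.
      rewrite ev_br in H by auto. apply H. unfold Ebr.
      destruct (sc_cl (arity L k) 0 (2 + arity L k) ltac:(lia)).
      apply sc_ifz. apply sc_mul; auto. apply sc_leb. apply sc_cpair; auto. apply sc_const. simpl; lia.
      apply sc_S; simpl; lia. apply sc_cpair; auto. apply sc_const. simpl. lia.
    + constructor; [|constructor]. apply guard0. exact Hneq.
  - cbn [b2n Nat.eqb] in Heq, Hneq. apply ev_comp with (ys := [0; S (opi L i c vs)]).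
    2:{ replace (opi L i c vs) with (pred (0 + S (opi L i c vs))) at 2 by lia. exact (plp_ok _ _). }
    constructor. apply guard0. exact Heq.
    constructor; [|constructor]. eapply guard1. exact Hneq. apply IHk; auto. lia.
Qed.

End Eff.

Section D.
Variable L : lang.
Variable Lg : term -> Prop.
Variable r : rf.
Hypothesis Hr : forall t, wf L t -> (exists y, reval r [code t] y) /\ (reval r [code t] 0 <-> Lg t).

Definition EG := Egoodi L (EX 1) (EX 0).
Definition EW := Emul EG (EX 1).
Definition EH := Eifz (EX 0) (Econst 1) (Eisz (EX 1)).
Definition rD := rComp (comp EH) [comp EG; rComp r [comp EW]].

Lemma rD_ok i v : reval rD [i; v] (if desigi L Lg i v then 1 else 0).
Proof.
  assert (HG : reval (comp EG) [i; v] (b2n (goodi L i v))).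
  { pose proof (comp_ok EG 2 [i; v]) as H.
    assert (E : eval EG [i; v] = b2n (goodi L i v)) by (unfold EG; rewrite ev_goodi; reflexivity). rewrite E in H.
    apply H; [|simpl; lia]. apply sc_goodi; simpl; lia. }
  assert (HW : reval (comp EW) [i; v] (b2n (goodi L i v) * v)).
  { pose proof (comp_ok EW 2 [i; v]) as H.
    assert (E : eval EW [i; v] = b2n (goodi L i v) * v) by (unfold EW, EG; rewrite ev_mul, ev_goodi; reflexivity).
    rewrite E in H. apply H; [|simpl; lia]. apply sc_mul. apply sc_goodi; simpl; lia. simpl; lia. }
  assert (HH : forall g y, reval (comp EH) [g; y] (ifz g 1 (b2n (y =? 0)))).
  { intros g y. pose proof (comp_ok EH 2 [g; y]) as H.
    assert (E : eval EH [g; y] = ifz g 1 (b2n (y =? 0))) by (unfold EH; rewrite ev_ifz, ev_const, ev_isz; reflexivity).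
    rewrite E in H. apply H; [|simpl; lia]. apply sc_ifz. simpl; lia. apply sc_const. apply sc_isz. simpl; lia. }
  unfold desigi. destruct (goodi L i v) eqn:Eg.
  - cbn [b2n] in HG, HW. replace (1 * v) with v in HW by lia.
    pose proof (dec_good L Lg i v Eg) as Hc. pose proof (Hr (dec L v) (dec_wf L Lg v)) as [[y Hy] Hiff].
    rewrite Hc in Hy, Hiff.
    destruct excluded_middle_informative as [HL|HL].
    + apply ev_comp with (ys := [1; 0]).
      * constructor; [exact HG|]. constructor; [|constructor]. apply ev_comp with (ys := [v]).
        constructor; [exact HW|constructor]. apply Hiff. exact HL.
      * exact (HH 1 0).
    + apply ev_comp with (ys := [1; y]).
      * constructor; [exact HG|]. constructor; [|constructor]. apply ev_comp with (ys := [v]).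
        constructor; [exact HW|constructor]. exact Hy.
      * destruct y. exfalso. apply HL. apply Hiff. exact Hy. exact (HH 1 (S y)).
  - cbn [b2n] in HG, HW. replace (0 * v) with 0 in HW by lia.
    destruct (Hr (Var 0) I) as [[y Hy] _].
    apply ev_comp with (ys := [0; y]).
    + constructor; [exact HG|]. constructor; [|constructor]. apply ev_comp with (ys := [0]).
      constructor; [exact HW|constructor]. exact Hy.
    + exact (HH 0 y).
Qed.
End D.

Theorem corollary2 (L : lang) (Lg : term -> Prop) :
  is_logic L Lg -> decidable_logic L Lg ->
  exists Ms : nat -> fmatrix, seq_approx L Lg Ms /\ effective_seq L Ms.
Proof.
  intros HL [r Hr]. exists (Ms L Lg). split.
  - apply seqA. exact HL.
  - exists (comp (ES (ES (EX 0)))), (rD L r), (Dk L (nconn L)). intros i. split; [|split].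
    + exact (comp_ok (ES (ES (EX 0))) 1 [i] ltac:(simpl; lia) ltac:(simpl; lia)).
    + intros v _. exact (rD_ok L Lg r Hr i v).
    + intros c vs Hc Hl _. exact (Dk_ok L (nconn L) i c vs Hc Hl).
Qed.
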